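(* Let $G = \mathbb{Z}_9$, $k = 3$ and $N = \langle 3\rangle = \{0,3,6\}$. Then $|G| = k^2$, $N\le G$ with $|N|=k$, the sum of the elements of $N$ is $0$, and the sum of the elements of $G/N$ is the identity coset $N$, yet $\exp(G)=9$ does not divide $k$ and $G$ has no pandiagonal magic Cayley-sudoku table. Also, for $G=\mathbb{Z}_2\times\mathbb{Z}_2$, $k=2$ and any subgroup $N$ of order $2$, we have $|G|=k^2$ and $\exp(G)$ divides $k$, but $G$ has no pandiagonal magic Cayley-sudoku table. Consequently, in Theorem 4.1 the hypothesis that $\exp(G)$ divides $k$ cannot be omitted, and hypotheses (3) (product of elements of $N$ is $1$) and (4) (product of elements of $G/N$ is $N$) cannot both be omitted.
   Context: Theorem 4.1 states: if $G$ is a finite abelian group with $|G|=k^2$, $\exp(G)$ dividing $k$, $N\le G$ with $|N|=k$, (3) the product of all elements of $N$ is the identity, and (4) the product of all elements of $G/N$ is the identity coset $N$, then $G$ has a pandiagonal magic Cayley-sudoku table. A Cayley table of $G$ is a square array with rows and columns each labeled by a listing of all elements of $G$, entry in row $r$, column $c$ being $r+c$. A Cayley-sudoku table is a Cayley table whose body is partitioned into uniformly sized rectangular blocks (consecutive rows and columns) each containing every element exactly once. It is pandiagonal magic if the blocks are square and every row (left to right), column, broken diagonal and broken antidiagonal (top to bottom) sum of each block is the identity; broken diagonals of a $k\times k$ array are the entries at positions $(\ell,\ell+j)$, broken antidiagonals those at $(\ell,j-\ell)$, $\ell=1,\dots,k$, indices mod $k$. *)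

(* Defs.v *)
From mathcomp Require Import all_boot all_fingroup all_algebra all_solvable.
Set Implicit Arguments.
Unset Strict Implicit.
Unset Printing Implicit Defensive.

Local Open Scope group_scope.

Section CayleySudoku.
Variable gT : finGroupType.

(* Entry of the Cayley table with row labels [rs] and column labels [cs]
   (0-based positions); the group operation is written multiplicatively
   (for the additive groups 'Z_n the finGroupType product is addition). *)
Definition ct_entry (rs cs : seq gT) (i j : nat) : gT :=
  nth 1 rs i * nth 1 cs j.

Definition listing (G : {set gT}) (rs : seq gT) : Prop :=
  perm_eq rs (enum G).

Definition cayley_sudoku (G : {set gT}) (rs cs : seq gT) (a b : nat) : Prop :=
  [/\ listing G rs, listing G cs, 0 < a /\ 0 < b,
      a %| #|G| /\ b %| #|G| &
      forall (I : 'I_(#|G| %/ a)) (J : 'I_(#|G| %/ b)) (x : gT), x \in G ->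
        #|[set p : 'I_a * 'I_b |
            ct_entry rs cs (I * a + p.1) (J * b + p.2) == x]| = 1%N].

(* Pandiagonal magic Cayley-sudoku table with square k x k blocks: every
   row, column, broken diagonal (positions (l, l+j)) and broken
   antidiagonal (positions (l, j-l)), indices mod k, of each block has
   product (= sum, additively) equal to the identity. *)
Definition pandiagonal_magic_cs (G : {set gT}) (rs cs : seq gT) (k : nat) : Prop :=
  cayley_sudoku G rs cs k k /\
  forall (I J : 'I_(#|G| %/ k)),
    let e (i j : nat) := ct_entry rs cs (I * k + i) (J * k + j) in
    [/\ forall i : 'I_k, \prod_(j < k) e i j = 1,
        forall j : 'I_k, \prod_(i < k) e i j = 1,
        forall j : 'I_k, \prod_(l < k) e l ((l + j) %% k) = 1 &
        forall j : 'I_k, \prod_(l < k) e l ((j + k - l) %% k) = 1].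

Definition has_pmcs_table (G : {set gT}) : Prop :=
  exists (rs cs : seq gT) (k : nat), pandiagonal_magic_cs G rs cs k.

End CayleySudoku.

(* Main.v *)
Require Import Defs.
From mathcomp Require Import all_boot all_fingroup all_algebra all_solvable.
From mathcomp Require Import zify ring.
Import GRing.Theory.
Local Open Scope group_scope.

Lemma perm_prod (T : finGroupType) (s1 s2 : seq T) :
  {in s1 &, forall x y, commute x y} -> perm_eq s1 s2 ->
  \prod_(x <- s1) x = \prod_(x <- s2) x.
Proof.
elim: s1 s2 => [|x s1 IH] s2 cs p.
  by have := perm_size p; case: s2 {p}.
have xs2 : x \in s2 by rewrite -(perm_mem p) mem_head.
move: p; case/splitPr: xs2 => s2l s2r p.
have p' : perm_eq s1 (s2l ++ s2r).
  rewrite -(perm_cons x); apply: perm_trans p _.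
  by rewrite -cat1s; apply/permPl/perm_catCA.
have ml : forall y, y \in s2l -> y \in x :: s1.
  by move=> y yl; rewrite (perm_mem p) mem_cat yl.
rewrite big_cons big_cat big_cons /= (IH _ _ p'); last first.
  by move=> u v us vs; apply: cs; rewrite inE ?us ?vs orbT.
rewrite big_cat /= !mulgA; congr (_ * _).
rewrite [\prod_(i <- s2l) i]big_seq.
apply: commute_prod => i il.
by apply: cs; rewrite ?mem_head ?ml.
Qed.

Lemma prod_abelian3 (T : finGroupType) (H : {group T}) :
  abelian H -> #|H| = 3 -> \prod_(x in H) x = 1.
Proof.
move=> cH H3.
set P := \prod_(x in H) x.
have PH : P \in H by apply: group_prod.
have cm : forall x y, x \in H -> y \in H -> commute x y.
  by move=> x y xH yH; apply: (centsP cH).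
have inv : \prod_(x in H) x^-1 = P^-1.
  have := @prodgM_commute _ _ (index_enum T) (mem H) id invg.
  rewrite big1 => [E|x _]; last by rewrite mulgV.
  have {}E := E (fun i j Hi Hj => cm _ _ Hi (groupVr Hj)).
  by move/(congr1 (mulg P^-1)): E; rewrite mulKg mulg1 => <-.
have perm : \prod_(x in H) x^-1 = P.
  rewrite /P -big_filter -[RHS]big_filter -(big_map invg xpredT id).
  set s := [seq _ <- _ | _].
  have sH : forall y, (y \in s) = (y \in H).
    by move=> y; rewrite mem_filter mem_index_enum andbT.
  apply: perm_prod.
    move=> u v /mapP [u' u's ->] /mapP [v' v's ->].
    by apply: cm; rewrite groupV -sH.
  apply: uniq_perm.
  - by rewrite map_inj_uniq ?filter_uniq ?index_enum_uniq //; apply: invg_inj.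
  - by rewrite filter_uniq ?index_enum_uniq.
  move=> y; rewrite sH -{1}(invgK y) mem_map; last exact: invg_inj.
  by rewrite sH groupV.
have P2 : P * P = 1 by rewrite -{1}perm inv mulVg.
have := expg_cardG PH; rewrite H3 expgS expgS expgS expg0 mulg1 mulgA P2 mul1g.
by [].
Qed.
Lemma cs_bij (gT : finGroupType) (rs cs : seq gT) k :
  cayley_sudoku [set: gT] rs cs k k ->
  [/\ (k * k = #|gT|)%N,
      forall x : gT, exists p : 'I_k * 'I_k, ct_entry rs cs p.1 p.2 = x &
      forall p q : 'I_k * 'I_k, ct_entry rs cs p.1 p.2 = ct_entry rs cs q.1 q.2 -> p = q].
Proof.
case=> _ _ [k0 _] [kd _] Hc.
have I0lt : (0 < #|[set: gT]| %/ k)%N.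
  by rewrite divn_gt0 // dvdn_leq // cardsT; apply/card_gt0P; exists 1.
have Hc' := Hc (Ordinal I0lt) (Ordinal I0lt); simpl in Hc'.
set f := fun p : 'I_k * 'I_k => ct_entry rs cs p.1 p.2.
have surj : forall x, exists p, f p = x.
  move=> x; have /eqP/cards1P [p Hp] := Hc' x (in_setT x).
  by exists p; have := set11 p; rewrite -Hp inE => /eqP.
have inj : injective f.
  move=> p q E; have /eqP/cards1P [z Hz] := Hc' (f p) (in_setT _).
  have : p \in [set z] by rewrite -Hz inE.
  have : q \in [set z] by rewrite -Hz inE E.
  by rewrite !inE => /eqP -> /eqP ->.
split=> //.
have -> : (k * k = #|{: 'I_k * 'I_k}|)%N by rewrite card_prod card_ord.
rewrite -(card_codom inj); apply/eqP; rewrite eqn_leq max_card /=.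
apply/subset_leq_card/subsetP => x _; have [p <-] := surj x; exact: codom_f.
Qed.
Lemma alg9 (ra rb ca cb r0 r1 r2 c0 c1 c2 : 'Z_9) :
 (r0 + cb + (r1 + cb + (r2 + cb + 0)) = 0 ->
 r0 + ca + (r1 + ca + (r2 + ca + 0)) = 0 ->
 rb + c0 + (rb + c1 + (rb + c2 + 0)) = 0 ->
 ra + c0 + (ra + c1 + (ra + c2 + 0)) = 0 -> ra + ca = 0 -> rb + cb = 1 -> False)%R.
Proof.
move=> h1 h2 h3 h4 hp hq.
have : ((3%:R : 'Z_9) * ((rb+cb) - (ra+ca)) =
   ((rb + c0 + (rb + c1 + (rb + c2 + 0))) - (ra + c0 + (ra + c1 + (ra + c2 + 0))))
   + ((r0 + cb + (r1 + cb + (r2 + cb + 0))) - (r0 + ca + (r1 + ca + (r2 + ca + 0)))))%R.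
  by ring.
rewrite h1 h2 h3 h4 hp hq subr0 mulr1 subrr addr0 => /eqP.
by [].
Qed.

Lemma mulgZ9 (x y : 'Z_9) : x * y = (x + y)%R. Proof. by []. Qed.
Lemma oneZ9 : (1 : 'Z_9) = 0%R. Proof. by []. Qed.

Lemma z9_nopm : ~ has_pmcs_table [set: 'Z_9].
Proof.
move=> [rs [cs [k [Hcs Hmag]]]].
have [kk surj inj] := @cs_bij _ _ _ _ Hcs.
have k3 : k = 3%N.
  have c9 : #|'Z_9| = 9%N by rewrite card_ord.
  rewrite c9 in kk; nia.
subst k.
have I0lt : (0 < #|[set: 'Z_9]| %/ 3)%N by rewrite cardsT card_ord.
have [rows cols _ _] := Hmag (Ordinal I0lt) (Ordinal I0lt).
simpl in rows, cols.
have [p Hp] := surj 0%R.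
have [q Hq] := surj 1%R.
have := rows p.1. have := rows q.1. have := cols p.2. have := cols q.2.
rewrite /ct_entry /= in Hp Hq *.
rewrite !big_ord_recl !big_ord0 /= !mul0n !add0n !mulgZ9 !oneZ9.
rewrite !mulgZ9 in Hp Hq.
move=> h1 h2 h3 h4; exact: alg9 h1 h2 h3 h4 Hp Hq.
Qed.

Lemma invZ22 (y : 'Z_2 * 'Z_2) : y^-1 = y.
Proof. case: y => [[[|[|a]] ?] [[|[|b]] ?]] //; apply/eqP; vm_compute; reflexivity. Qed.
Lemma sqZ22 (y : 'Z_2 * 'Z_2) : y^+2 = 1.
Proof. case: y => [[[|[|a]] ?] [[|[|b]] ?]] //; apply/eqP; vm_compute; reflexivity. Qed.

Lemma z22_nopm : ~ has_pmcs_table [set: 'Z_2 * 'Z_2].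
Proof.
move=> [rs [cs [k [Hcs Hmag]]]].
have [kk surj inj] := @cs_bij _ _ _ _ Hcs.
have k2 : k = 2%N.
  have c4 : #|{: 'Z_2 * 'Z_2}| = 4%N by rewrite card_prod card_ord.
  rewrite c4 in kk; nia.
subst k.
have I0lt : (0 < #|[set: 'Z_2 * 'Z_2]| %/ 2)%N by rewrite cardsT card_prod card_ord.
have [rows _ _ _] := Hmag (Ordinal I0lt) (Ordinal I0lt).
have := rows ord0.
rewrite !big_ord_recl big_ord0 /= mulg1 => /(canRL (mulKg _)).
rewrite mulg1 invZ22 /ct_entry !mul0n !add0n /= => E.
have := inj (ord0, ord0) (ord0, ord_max).
rewrite /ct_entry /= => /(_ (esym E)) /(congr1 (fun p => val p.2)).
by [].
Qed.

Theorem lemma4p4 :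
  (let G := [set: 'Z_9] in
   let N := <[(3%:R : 'Z_9)%R]> in
   [/\ #|G| = (3 ^ 2)%N,
       N \subset G /\ #|N| = 3%N,
       \prod_(x in N) x = 1 /\ \prod_(C in G / N) C = 1,
       ~~ (exponent G %| 3)%N &
       ~ has_pmcs_table G])
  /\
  (let G := [set: 'Z_2 * 'Z_2] in
   [/\ #|G| = (2 ^ 2)%N,
       (exponent G %| 2)%N &
       ~ has_pmcs_table G]).
Proof.
split.
  move=> G N.
  have e3 : (3%:R : 'Z_9)%R = (Zp1 ^+ 3)%g by apply: val_inj.
  have N3 : #|N| = 3%N.
    rewrite /N -/(order _) e3 orderXgcd order_Zp1. by [].
  have nN : (<[(3%:R : 'Z_9)%R]>%G <| [set: 'Z_9]%G).
    by rewrite -sub_abelian_normal ?subsetT // Zp_abelian.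
  split.
  - by rewrite cardsT card_ord.
  - by split; [apply: subsetT | ].
  - split.
      by apply: (@prod_abelian3 _ <[(3%:R : 'Z_9)%R]>%G); [apply: cycle_abelian|].
    apply: (@prod_abelian3 _ ([set: 'Z_9] / <[(3%:R : 'Z_9)%R]>)%G).
      by apply: quotient_abelian; apply: Zp_abelian.
    by rewrite -(divg_normal nN) /= cardsT card_ord N3.
  - apply/negP => d; have := dvdn_trans (dvdn_exponent (in_setT Zp1)) d.
    by rewrite order_Zp1.
  - exact: z9_nopm.
move=> G; split.
- by rewrite cardsT card_prod card_ord.
- by apply/exponentP => x _; apply: sqZ22.
- exact: z22_nopm.
Qed.
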